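(* Let $(\mathcal{E},\mathcal{L},\mathcal{B})$ be a weakly left resolving labelled space whose accommodating family $\mathcal{B}$ is closed under relative complements, let $S$ be its associated inverse semigroup, and let $\xi$ be a tight filter in $E(S)$ with word $\alpha$. Then for every $0<n\le|\alpha|$ ($n$ finite), $\xi_n$ is an ultrafilter in $\mathcal{B}_{\alpha_{1,n}}$, and $\xi_0$ is either empty or an ultrafilter in $\mathcal{B}$.
   Context: A directed graph $\mathcal{E}=(\mathcal{E}^0,\mathcal{E}^1,r,s)$ has countable nonempty vertex set, edge set, range/source maps; paths satisfy $r(\lambda_i)=s(\lambda_{i+1})$. A labelled graph has a surjective labelling $\mathcal{L}:\mathcal{E}^1\to\mathcal{A}$ extended letterwise to finite and infinite paths. $\omega$ is the empty word, $\mathcal{L}^+=\bigcup_{n\ge1}\mathcal{L}(\mathcal{E}^n)$, $\mathcal{L}^*=\{\omega\}\cup\mathcal{L}^+$, $\mathcal{L}^\infty$ the labels of infinite paths; $\alpha_{i,j}=\alpha_i\cdots\alpha_j$, $\alpha_{1,0}=\omega$. For $A\subseteq\mathcal{E}^0$, $\alpha\in\mathcal{L}^+$: $r(A,\alpha)=\{r(\lambda):\mathcal{L}(\lambda)=\alpha,\ s(\lambda)\in A\}$, $r(A,\omega)=A$, $r(\alpha)=r(\mathcal{E}^0,\alpha)$. $\mathcal{B}$ accommodating: closed under $r(\cdot,\alpha)$, finite intersections and unions, contains $r(\alpha)$ for $\alpha\in\mathcal{L}^+$; labelled space weakly left resolving if $r(A\cap B,\alpha)=r(A,\alpha)\cap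 r(B,\alpha)$ for $A,B\in\mathcal{B}$, $\alpha\in\mathcal{L}^+$. $\mathcal{B}_\alpha=\mathcal{B}\cap\mathcal{P}(r(\alpha))$, $\mathcal{B}_\omega=\mathcal{B}$. $S$ = triples $(\alpha,A,\beta)$, $\alpha,\beta\in\mathcal{L}^*$, $\emptyset\ne A\in\mathcal{B}_\alpha\cap\mathcal{B}_\beta$, plus $0$; product $(\alpha,A,\beta)(\gamma,B,\delta)=(\alpha\gamma',r(A,\gamma')\cap B,\delta)$ if $\gamma=\beta\gamma'$, $=(\alpha,A\cap r(B,\beta'),\delta\beta')$ if $\beta=\gamma\beta'$, $=0$ otherwise (empty middle entry identified with $0$). $E(S)=\{(\alpha,A,\alpha)\}\cup\{0\}$, $p\le q$ iff $pq=p$. A filter in a poset with least element $0$ is a nonempty upward-closed subset not containing $0$ in which any two elements have a common lower bound in it; an ultrafilter is a maximal filter; filters in $\mathcal{B}_\alpha$ are under inclusion. The word of a filter $\xi$ in $E(S)$ is the longest word among its elements if it exists, and otherwise the unique $\alpha\in\mathcal{L}^\infty$ such that all elements of $\xi$ are of the form $(\alpha_{1,n},A,\alpha_{1,n})$; $\xi_n=\{A\in\mathcal{B}:(\alpha_{1,n},A,\alpha_{1,n})\in\xi\}$. For $x\in E(S)$, a set $Z\subseteq\{y\in E(S):y\le x\}$ is a cover for $x$ if for every nonzero $y\le x$ there is $z\in Z$ with $zy\neq0$. A filter $\xi$ in $E(S)$ is tight if for every $x\in\xi$ and every finite cover $Z$ of $x$ one has $Z\cap\xi\neq\emptyset$.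 *)

(* Defs.v *)
From Stdlib Require Import List Arith Classical ClassicalEpsilon.
Import ListNotations.

Record LGraph := {
  V : Type; Ed : Type; Alph : Type;
  src : Ed -> V; rng : Ed -> V;
  lab : Ed -> Alph }.

Set Implicit Arguments.
Unset Strict Implicit.

Definition vset (G : LGraph) := V G -> Prop.

Definition is_labelled_graph (G : LGraph) : Prop :=
  (exists f : V G -> nat, forall x y, f x = f y -> x = y) /\
  (exists f : Ed G -> nat, forall x y, f x = f y -> x = y) /\
  inhabited (V G) /\
  (forall a : Alph G, exists e, lab G e = a).

Fixpoint is_path (G : LGraph) (es : list (Ed G)) : Prop :=
  match es with
  | [] => False
  | [e] => True
  | e :: ((f :: _) as es') => rng G e = src G f /\ is_path es'
  end.

Definition Lplus (G : LGraph) (w : list (Alph G)) : Prop :=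
  exists es, is_path es /\ map (lab G) es = w.

Definition Linf (G : LGraph) (w : nat -> Alph G) : Prop :=
  exists p : nat -> Ed G, (forall i, rng G (p i) = src G (p (S i))) /\
                          (forall i, lab G (p i) = w i).

Definition r (G : LGraph) (A : vset G) (w : list (Alph G)) : vset G :=
  match w with
  | [] => A
  | _ => fun v => exists es e0, is_path es /\ map (lab G) es = w /\
           A (src G (hd e0 es)) /\ rng G (last es e0) = v
  end.

Definition fullset (G : LGraph) : vset G := fun _ => True.
Definition rw (G : LGraph) (w : list (Alph G)) : vset G := r (@fullset G) w.

Definition subset (G : LGraph) (A B : vset G) := forall v, A v -> B v.
Definition inter (G : LGraph) (A B : vset G) : vset G := fun v => A v /\ B v.
Definition union (G : LGraph) (A B : vset G) : vset G := fun v => A v \/ B v.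
Definition diff (G : LGraph) (A B : vset G) : vset G := fun v => A v /\ ~ B v.
Definition nonempty (G : LGraph) (A : vset G) := exists v, A v.

Definition accommodating (G : LGraph) (B : vset G -> Prop) : Prop :=
  (forall A w, B A -> Lplus w -> B (r A w)) /\
  (forall A C, B A -> B C -> B (inter A C)) /\
  (forall A C, B A -> B C -> B (union A C)) /\
  (forall w, Lplus w -> B (rw w)).

Definition weakly_left_resolving (G : LGraph) (B : vset G -> Prop) : Prop :=
  forall A C w, B A -> B C -> Lplus w ->
    forall v, r (inter A C) w v <-> inter (r A w) (r C w) v.

Definition rel_compl_closed (G : LGraph) (B : vset G -> Prop) : Prop :=
  forall A C, B A -> B C -> B (diff A C).

Definition Bw (G : LGraph) (B : vset G -> Prop) (w : list (Alph G)) (A : vset G) : Prop :=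
  B A /\ (w <> [] -> subset A (rw w)).

(** Elements of E(S): [None] is 0, [Some (a, A)] is the idempotent (a, A, a). *)
Definition ES (G : LGraph) := option (list (Alph G) * vset G).

Definition inES (G : LGraph) (B : vset G -> Prop) (p : ES G) : Prop :=
  match p with
  | None => True
  | Some (a, A) => nonempty A /\ Bw B a A
  end.

Definition mk (G : LGraph) (a : list (Alph G)) (C : vset G) : ES G :=
  if excluded_middle_informative (nonempty C) then Some (a, C) else None.

(** product in S restricted to idempotents (empty middle entry = 0) *)
Definition mulE (G : LGraph) (p q : ES G) : ES G :=
  match p, q with
  | Some (a, A), Some (b, C) =>
      if excluded_middle_informative (exists b', b = a ++ b') then
        mk b (inter (r A (skipn (length a) b)) C)
      else if excluded_middle_informative (exists a', a = b ++ a') then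
        mk a (inter A (r C (skipn (length b) a)))
      else None
  | _, _ => None
  end.

Definition leE (G : LGraph) (p q : ES G) : Prop := mulE p q = p.

Definition filterE (G : LGraph) (B : vset G -> Prop) (xi : ES G -> Prop) : Prop :=
  (exists x, xi x) /\
  (forall x, xi x -> inES B x) /\
  ~ xi None /\
  (forall x y, xi x -> inES B y -> leE x y -> xi y) /\
  (forall x y, xi x -> xi y -> exists z, xi z /\ leE z x /\ leE z y).

Definition is_cover (G : LGraph) (B : vset G -> Prop) (x : ES G) (Z : list (ES G)) : Prop :=
  (forall z, In z Z -> inES B z /\ leE z x) /\
  (forall y, inES B y -> y <> None -> leE y x ->
     exists z, In z Z /\ mulE z y <> None).

Definition tight (G : LGraph) (B : vset G -> Prop) (xi : ES G -> Prop) : Prop :=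
  filterE B xi /\
  forall x Z, xi x -> is_cover B x Z -> exists z, In z Z /\ xi z.

Inductive word (G : LGraph) :=
  | FinW : list (Alph G) -> word G
  | InfW : (nat -> Alph G) -> word G.

Definition prefix_inf (G : LGraph) (w : nat -> Alph G) (n : nat) : list (Alph G) :=
  map w (seq 0 n).

Definition wordOfE (G : LGraph) (x : ES G) : nat :=
  match x with None => 0 | Some (a, _) => length a end.

Definition filter_word (G : LGraph) (xi : ES G -> Prop) (w : word G) : Prop :=
  match w with
  | FinW a => (exists A, xi (Some (a, A))) /\
              (forall x, xi x -> wordOfE x <= length a)
  | InfW a => ~ (exists b A, xi (Some (b, A)) /\
                   forall x, xi x -> wordOfE x <= length b) /\
              Linf a /\
              (forall x, xi x -> exists n A, x = Some (prefix_inf a n, A))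
  end.

Definition wprefix (G : LGraph) (w : word G) (n : nat) : list (Alph G) :=
  match w with FinW a => firstn n a | InfW a => prefix_inf a n end.

Definition le_len (G : LGraph) (n : nat) (w : word G) : Prop :=
  match w with FinW a => n <= length a | InfW _ => True end.

Definition xi_n (G : LGraph) (B : vset G -> Prop) (xi : ES G -> Prop) (w : word G) (n : nat)
  : vset G -> Prop :=
  fun A => B A /\ xi (Some (wprefix w n, A)).

(** filters and ultrafilters in B_alpha, ordered by inclusion, least element empty set *)
Definition filterB (G : LGraph) (B : vset G -> Prop) (a : list (Alph G)) (F : vset G -> Prop) : Prop :=
  (exists A, F A) /\
  (forall A, F A -> Bw B a A) /\
  (forall A, F A -> nonempty A) /\
  (forall A C, F A -> Bw B a C -> subset A C -> F C) /\
  (forall A C, F A -> F C -> exists D, F D /\ subset D A /\ subset D C).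

Definition ultrafilterB (G : LGraph) (B : vset G -> Prop) (a : list (Alph G)) (F : vset G -> Prop) : Prop :=
  filterB B a F /\
  forall F', filterB B a F' -> (forall A, F A -> F' A) -> forall A, F' A -> F A.

(* Main.v *)
Require Import Defs.
From Stdlib Require Import List Arith Lia Classical ClassicalEpsilon FunctionalExtensionality PropExtensionality.
Import ListNotations.
Set Implicit Arguments.

Lemma vext (G : LGraph) (X Y : vset G) : (forall v, X v <-> Y v) -> X = Y.
Proof. intro H; apply functional_extensionality; intro v; apply propositional_extensionality; auto. Qed.

Lemma mk_some (G : LGraph) (a : list (Alph G)) C : nonempty C -> mk a C = Some (a, C).
Proof. intro H; unfold mk; destruct (excluded_middle_informative _); tauto. Qed.

Lemma mk_inv (G : LGraph) (a b : list (Alph G)) C D : mk a C = Some (b, D) -> a = b /\ C = D.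
Proof. unfold mk; destruct (excluded_middle_informative _); intro H; inversion H; auto. Qed.

Lemma skipn_len {T} (p s : list T) : skipn (length p) (p ++ s) = s.
Proof. induction p; simpl; auto. Qed.

Lemma r_split (G : LGraph) (C A : vset G) w v :
  r C w v -> r (inter C A) w v \/ r (diff C A) w v.
Proof.
  destruct w as [|x w]; simpl.
  - intro H; destruct (classic (A v)); [left|right]; split; auto.
  - intros [es [e0 [H1 [H2 [H3 H4]]]]].
    destruct (classic (A (src G (hd e0 es)))); [left|right]; exists es, e0; repeat split; auto.
Qed.

Lemma r_ne (G : LGraph) (A : vset G) w v : w <> [] -> r A w v -> Lplus w /\ exists u, A u.
Proof.
  destruct w as [|x w]; [congruence|]; simpl.
  intros _ [es [e0 [H1 [H2 [H3 H4]]]]]. split; [exists es; auto| eauto].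
Qed.

Lemma is_path_app (G : LGraph) (es1 es2 : list (Ed G)) : es1 <> [] -> es2 <> [] ->
  is_path (es1 ++ es2) -> is_path es1 /\ is_path es2 /\ forall e0, rng G (last es1 e0) = src G (hd e0 es2).
Proof.
  induction es1 as [|e es1 IH]; [congruence|]. intros _ Hne.
  destruct es1 as [|e' es1'].
  - destruct es2 as [|f es2]; [congruence|]. simpl. intros [H1 H2]. auto.
  - change ((e :: e' :: es1') ++ es2) with (e :: ((e' :: es1') ++ es2)).
    intro H. simpl in H. destruct H as [H1 H2].
    destruct (IH ltac:(discriminate) Hne H2) as [A1 [A2 A3]].
    split; [simpl; auto|]. split; auto.
Qed.

Lemma last_app' {T} (l1 l2 : list T) d : l2 <> [] -> last (l1 ++ l2) d = last l2 d.
Proof.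
  intro H; induction l1 as [|x l1 IH]; simpl; auto.
  rewrite IH. destruct l1; simpl; destruct l2; try congruence; auto.

Qed.

Lemma r_app (G : LGraph) (A : vset G) p s v : p <> [] -> s <> [] ->
  r A (p ++ s) v -> r (r A p) s v.
Proof.
  intros Hp Hs H.
  destruct p as [|x p]; [congruence|]. destruct s as [|y s]; [congruence|].
  simpl in H. destruct H as [es [e0 [H1 [H2 [H3 H4]]]]].
  change (x :: p ++ y :: s) with ((x :: p) ++ (y :: s)) in H2.
  destruct (map_eq_app _ _ _ _ H2) as [l1 [l2 [E [M1 M2]]]]. subst es.
  assert (N1 : l1 <> []) by (intro; subst; discriminate).
  assert (N2 : l2 <> []) by (intro; subst; discriminate).
  destruct (@is_path_app G l1 l2 N1 N2 H1) as [P1 [P2 P3]].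
  simpl. exists l2, e0. repeat split; auto.
  - exists l1, e0. repeat split; auto.
    + destruct l1; [congruence|]; simpl in *; auto.
  - rewrite last_app' in H4 by auto. auto.
Qed.

Lemma mulE_prefix (G : LGraph) (a b' : list (Alph G)) X D :
  mulE (Some (a, X)) (Some (a ++ b', D)) = mk (a ++ b') (inter (r X b') D).
Proof.
  unfold mulE. destruct (excluded_middle_informative _) as [_|n].
  - rewrite skipn_len. reflexivity.
  - exfalso; apply n; eauto.
Qed.

Lemma le_same (G : LGraph) (a : list (Alph G)) D A :
  nonempty D -> subset D A -> leE (Some (a, D)) (Some (a, A)).
Proof.
  intros Hn Hs. unfold leE. pose proof (mulE_prefix a [] D A) as E.
  rewrite app_nil_r in E. rewrite E. simpl.
  rewrite mk_some.
  - f_equal. f_equal. apply vext. intro v; unfold inter; split; [tauto|]. intro; split; auto; try (apply Hs; auto).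
  - destruct Hn as [v Hv]; exists v; split; auto.
Qed.

Lemma le_ext (G : LGraph) (a a' : list (Alph G)) D A :
  a' <> [] -> nonempty D -> subset D (r A a') -> leE (Some (a ++ a', D)) (Some (a, A)).
Proof.
  intros Ha Hn Hs. unfold leE, mulE.
  destruct (excluded_middle_informative _) as [[b' E]|_].
  - exfalso. apply (f_equal (@length _)) in E. rewrite !length_app in E.
    destruct a'; [congruence|]; simpl in E; lia.
  - destruct (excluded_middle_informative _) as [_|n].
    + rewrite skipn_len, mk_some.
      * f_equal. f_equal. apply vext. intro v; unfold inter; split; [tauto|]. intro; split; auto; try (apply Hs; auto).
      * destruct Hn as [v Hv]; exists v; split; auto.
    + exfalso; apply n; eauto.
Qed.

Lemma le_inv (G : LGraph) (a b : list (Alph G)) D A :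
  leE (Some (b, D)) (Some (a, A)) -> exists a', b = a ++ a' /\ subset D (r A a').
Proof.
  unfold leE, mulE.
  destruct (excluded_middle_informative _) as [[b' E]|_].
  - intro H. apply mk_inv in H. destruct H as [H1 H2]. subst a.
    assert (b' = []) by (destruct b'; auto; apply (f_equal (@length _)) in H1; rewrite length_app in H1; simpl in H1; lia).
    subst b'. rewrite app_nil_r in *. exists []. rewrite app_nil_r. split; auto.
    intros v Hv. rewrite <- H2 in Hv. destruct Hv; auto.
  - destruct (excluded_middle_informative _) as [[a' E]|_].
    + intro H. apply mk_inv in H. destruct H as [_ H2]. exists a'; split; auto.
      subst b. rewrite skipn_len in H2. intros v Hv. rewrite <- H2 in Hv. destruct Hv; auto.
    + discriminate.
Qed.

Lemma ultra (G : LGraph) (B : vset G -> Prop) (HB : accommodating B)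
  (Hwlr : weakly_left_resolving B) (Hrc : rel_compl_closed B)
  (xi : ES G -> Prop) (Ht : tight B xi) (a : list (Alph G)) :
  (exists A, B A /\ xi (Some (a, A))) ->
  ultrafilterB B a (fun A => B A /\ xi (Some (a, A))).
Proof.
  intro Hex.
  destruct HB as [HBr [HBi [HBu HBw]]].
  destruct Ht as [[Hxne [HxES [HxN [Hxup Hxdir]]]] Htg].
  assert (Fil : filterB B a (fun A => B A /\ xi (Some (a, A)))).
  { split; [exact Hex|]. split.
    { intros A [_ H]. apply HxES in H. simpl in H. tauto. } split.
    { intros A [_ H]. apply HxES in H. simpl in H. tauto. } split.
    { intros A C [_ H] HC Hs. split; [apply HC|].
      apply (Hxup _ _ H).
      - simpl. split; auto. apply HxES in H. destruct H as [[v Hv] _]. exists v; auto.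
      - apply le_same; auto. apply HxES in H. simpl in H. tauto. }
    intros A C [HA1 HA] [HC1 HC].
    destruct (Hxdir _ _ HA HC) as [z [Hz [Hz1 Hz2]]].
    destruct z as [[b D]|]; [|contradiction].
    destruct (le_inv Hz1) as [a1 [E1 S1]].
    destruct (le_inv Hz2) as [a2 [E2 S2]].
    subst b. apply app_inv_head in E2. subst a2.
    pose proof (HxES _ Hz) as [[v Hv] [HBD _]].
    assert (HAC : B (inter A C)) by auto.
    assert (Hsub : subset D (r (inter A C) a1)).
    { intros u Hu. destruct a1 as [|x a1].
      - split; [apply S1|apply S2]; auto.
      - pose proof (S1 u Hu) as R1. destruct (@r_ne G _ (x::a1) u ltac:(discriminate) R1) as [Lp _].
        apply Hwlr; auto. split; auto. }
    exists (inter A C). split; [|split; unfold subset, inter; intros u [? ?]; auto]. split; auto.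
    apply (Hxup _ _ Hz).
    - simpl. split; [|split; auto].
      + destruct a1 as [|x a1].
        * exists v; apply Hsub; auto.
        * destruct (@r_ne G _ (x::a1) v ltac:(discriminate) (Hsub v Hv)) as [_ [u Hu]]. exists u; auto.
      + intros Hne u [Hu _]. apply HxES in HA. destruct HA as [_ [_ HA]]. apply HA; auto.
    - destruct a1 as [|x a1].
      + rewrite app_nil_r. apply le_same; auto. exists v; auto.
      + apply le_ext; auto. discriminate. exists v; auto. }
  split; [exact Fil|].
  intros F' Fil' Hsub A HA.
  destruct Fil as [[C0 [HC0b HC0]] [FBw [Fne [Fup Fdir]]]].
  destruct Fil' as [_ [F'Bw [F'ne [F'up F'dir]]]].
  assert (HAB : Bw B a A) by auto.
  assert (HC0B : Bw B a C0) by (apply FBw; auto).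
  destruct (classic (nonempty (diff C0 A))) as [Hd|Hd].
  2:{ apply (Fup C0); auto. intros v Hv. apply NNPP; intro Hn. apply Hd. exists v; split; auto. }
  assert (Hi : nonempty (inter C0 A)).
  { destruct (F'dir C0 A) as [D [HD [S1 S2]]]; auto.
    destruct (F'ne _ HD) as [v Hv]. exists v; split; auto. }
  assert (HBi2 : B (inter C0 A)) by (apply HBi; [apply HC0B | apply HAB]).
  assert (HBd : B (diff C0 A)) by (apply Hrc; [apply HC0B | apply HAB]).
  destruct (Htg (Some (a, C0)) [Some (a, inter C0 A); Some (a, diff C0 A)] HC0) as [z [Hz Hxz]].
  - split.
    + intros z Hz. simpl in Hz. destruct Hz as [<-|[<-|[]]].
      * split; [simpl; split; auto; split; auto|].
        { intros Hne u [Hu _]. apply HC0B; auto. }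
        apply le_same; auto. unfold subset, inter; intros u [? ?]; auto.
      * split; [simpl; split; auto; split; auto|].
        { intros Hne u [Hu _]. apply HC0B; auto. }
        apply le_same; auto. unfold subset, inter; intros u [? ?]; auto.
    + intros y Hy HyN Hle. destruct y as [[b D]|]; [|congruence].
      destruct (le_inv Hle) as [a1 [-> S1]].
      destruct Hy as [[v Hv] _].
      destruct (@r_split G C0 A a1 v (S1 v Hv)) as [R|R].
      * exists (Some (a, inter C0 A)). split; [simpl; auto|].
        rewrite mulE_prefix, mk_some; [discriminate|]. exists v; split; auto.
      * exists (Some (a, diff C0 A)). split; [simpl; auto|].
        rewrite mulE_prefix, mk_some; [discriminate|]. exists v; split; auto.
  - simpl in Hz. destruct Hz as [<-|[<-|[]]].
    + apply (Fup (inter C0 A)); auto. unfold subset, inter; intros u [? ?]; auto.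
    + exfalso. destruct (F'dir (diff C0 A) A) as [D [HD [S1 S2]]]; auto.
      destruct (F'ne _ HD) as [v Hv]. destruct (S1 v Hv) as [_ Hn]. apply Hn, S2; auto.
Qed.

Lemma pref_exists (G : LGraph) (B : vset G -> Prop) (HB : accommodating B)
  (xi : ES G -> Prop) (Ht : tight B xi) (p s : list (Alph G)) A :
  xi (Some (p ++ s, A)) -> p <> [] -> exists C, B C /\ xi (Some (p, C)).
Proof.
  intros Hx Hp.
  destruct HB as [HBr [HBi [HBu HBw]]].
  destruct Ht as [[Hxne [HxES [HxN [Hxup Hxdir]]]] Htg].
  pose proof (HxES _ Hx) as [[v Hv] [HBA HAs]].
  destruct s as [|y s].
  - rewrite app_nil_r in Hx. exists A; auto.
  - assert (Hps : p ++ y :: s <> []) by (destruct p; [congruence|discriminate]).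
    assert (Hsub : subset A (r (rw p) (y :: s))).
    { intros u Hu. apply r_app; auto. discriminate. apply HAs; auto. }
    destruct (@r_ne G _ (y::s) v ltac:(discriminate) (Hsub v Hv)) as [_ [u Hu]].
    destruct (@r_ne G _ p u Hp Hu) as [Lp _].
    exists (rw p). split; auto.
    apply (Hxup _ _ Hx).
    + simpl. split; [exists u; auto|]. split; auto. intros _ x Hx'; auto.
    + apply le_ext; auto. discriminate. exists v; auto.
Qed.

Lemma bounded_max (P : nat -> Prop) n : (exists m, P m) -> (forall m, P m -> m < n) ->
  exists m, P m /\ forall m', P m' -> m' <= m.
Proof.
  revert P; induction n as [|n IH]; intros P Hex Hb.
  - destruct Hex as [m Hm]. apply Hb in Hm. lia.
  - destruct (classic (P n)) as [Hn|Hn].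
    + exists n. split; auto. intros m' Hm'. apply Hb in Hm'. lia.
    + apply IH; auto. intros m Hm. pose proof (Hb m Hm). destruct (Nat.eq_dec m n); subst; [contradiction|lia].
Qed.

Theorem mainTheorem15 (G : LGraph) (B : vset G -> Prop)
  (HG : is_labelled_graph G) (HB : accommodating B)
  (Hwlr : weakly_left_resolving B) (Hrc : rel_compl_closed B)
  (xi : ES G -> Prop) (Htight : tight B xi) (w : word G) (Hw : filter_word xi w) :
  (forall n, 0 < n -> le_len n w -> ultrafilterB B (wprefix w n) (xi_n B xi w n)) /\
  ((forall A, ~ xi_n B xi w 0 A) \/ ultrafilterB B [] (xi_n B xi w 0)).
Proof.
  split.
  - intros n Hn Hl. unfold xi_n. apply ultra; auto.
    destruct w as [a|a]; simpl in *.
    + destruct Hw as [[A HA] _].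
      rewrite <- (firstn_skipn n a) in HA.
      eapply pref_exists; [exact HB|exact Htight|exact HA|].
      intro E. apply (f_equal (@length _)) in E. rewrite length_firstn in E. simpl in E. lia.
    + destruct Hw as [Hno [_ Hpre]].
      assert (Hge : exists x, xi x /\ n <= wordOfE x).
      { apply NNPP; intro Hc.
        destruct Htight as [[Hxne _] _].
        destruct (@bounded_max (fun m => exists x, xi x /\ wordOfE x = m) n) as [m [[x [Hx Em]] Hmax]].
        - destruct Hxne as [x Hx]. eauto.
        - intros m [x [Hx Em]]. subst m. apply Nat.nle_gt. intro. apply Hc; eauto.
        - apply Hno. destruct (Hpre x Hx) as [k [A0 ->]]. exists (prefix_inf a k), A0. split; auto.
          intros y Hy. subst m. apply Hmax. eauto. }
      destruct Hge as [x [Hx Hle]].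
      destruct (Hpre x Hx) as [k [A0 ->]]. simpl in Hle.
      unfold prefix_inf in Hle. rewrite length_map, length_seq in Hle.
      unfold prefix_inf in Hx.
      replace k with (n + (k - n)) in Hx by lia.
      rewrite seq_app, map_app in Hx.
      eapply pref_exists; [exact HB|exact Htight|exact Hx|].
      intro E. apply (f_equal (@length _)) in E. unfold prefix_inf in E. rewrite length_map, length_seq in E. simpl in E. lia.
  - destruct (classic (exists A, xi_n B xi w 0 A)) as [Hex|Hex].
    + right. destruct w as [a|a]; unfold xi_n in *; simpl in *; apply ultra; auto.
    + left. intros A HA; apply Hex; eauto.
Qed.
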